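(* Let $\Sigma$ be the signature consisting of two non-rigid constant symbols $a,b$. For $n\in\mathbb N$ let $\chi_n$ be a classical first-order sentence (in the pure language of equality) expressing that the domain has at least $n$ elements, and let $X=\{\chi_n\mid n\in\mathbb N\}$. Let $\eta := \big(\mathrm{dep}(a,b)\wedge \mathrm{dep}(b,a)\wedge \exists^{\mathsf i}x\,(x\neq b)\big)\to \exists^{\mathsf i}x\,(x\neq a)$ and $\theta:=\exists^{\mathsf i}x\,\exists^{\mathsf i}y\,\neg(x=a\wedge y=b)$. Then: (1) $X\cup\{\eta\}\models_{\mathrm{id}}\theta$; and (2) for every finite $X_0\subseteq X$, $X_0\cup\{\eta\}\not\models_{\mathrm{id}}\theta$.
   Context: Inquisitive first-order logic InqBQ. A signature consists of predicate symbols and function symbols, each with an arity; function symbols are either rigid or non-rigid, and function symbols of arity $0$ are constant symbols. Terms are built from variables and function symbols as usual. Formulas are given by $\phi ::= P(t_1,\dots,t_n)\mid (t=t')\mid \bot\mid (\phi\wedge\phi)\mid(\phi\mathbin{\vee\!\!\!\vee}\phi)\mid(\phi\to\phi)\mid\forall x\phi\mid\exists^{\mathsf i}x\phi$, where $\mathbin{\vee\!\!\!\vee}$ is inquisitive disjunction and $\exists^{\mathsf i}$ is the inquisitive existential quantifier. Abbreviations: $\neg\phi:=\phi\to\bot$, $(t\neq t'):=\neg(t=t')$; the classical connectives $\vee,\exists$ are defined by $\phi\vee\psi:=\neg(\neg\phi\wedge\neg\psi)$, $\exists x\phi:=\neg\forall x\neg\phi$. Formulas without $\mathbin{\vee\!\!\!\vee}$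 and $\exists^{\mathsf i}$ are called classical. An id-model is a triple $M=(W,D,I)$ with $W$ a non-empty set of worlds, $D$ a non-empty domain, and $I$ assigning to each world $w$ an interpretation $I_w$ giving each $n$-ary predicate $P$ a relation $P_w\subseteq D^n$ and each $n$-ary function symbol $f$ a function $f_w:D^n\to D$ (rigid symbols get the same interpretation at every world); equality is interpreted as identity on $D$ at every world. Term values $[t]^g_w$ are defined as usual. Support of a formula at a state $s\subseteq W$ under an assignment $g$: $M,s\models_g P(t_1,\dots,t_n)$ iff $([t_1]^g_w,\dots,[t_n]^g_w)\in P_w$ for all $w\in s$; $M,s\models_g t=t'$ iff $[t]^g_w=[t']^g_w$ for all $w\in s$; $M,s\models_g\bot$ iff $s=\emptyset$; $\wedge$ is conjunction of support; $M,s\models_g\phi\mathbin{\vee\!\!\!\vee}\psi$ iff $M,s\models_g\phi$ or $M,s\models_g\psi$; $M,s\models_g\phi\to\psi$ iff for every $t\subseteq s$, $M,t\models_g\phi$ implies $M,t\models_g\psi$; $M,s\models_g\forall x\phi$ iff $M,s\models_{g[x\mapsto d]}\phi$ for all $d\in D$; $M,s\models_g\exists^{\mathsf i}x\phi$ iff $M,s\models_{g[x\mapsto d]}\phi$ for some $d\in D$. For a term $t$, $\lambda t:=\exists^{\mathsf i}x\,(x=t)$ with $x$ a variable not occurring in $t$, and $\mathrm{dep}(t,t'):=\lambda t\to\lambda t'$. id-entailment: $\Phi\models_{\mathrm{id}}\psi$ means that for every id-model $M$, state $s\subseteq W$ and assignment $g$, if $M,s\models_g\phi$ for all $\phi\in\Phi$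 then $M,s\models_g\psi$. *)

(* Defs.v *)
From Stdlib Require Import List Arith.
Import ListNotations.

Inductive term : Type :=
| tvar : nat -> term
| tA : term
| tB : term.

Inductive form : Type :=
| fEq : term -> term -> form
| fBot : form
| fAnd : form -> form -> form
| fIdisj : form -> form -> form
| fImp : form -> form -> form
| fAll : nat -> form -> form
| fIex : nat -> form -> form.

Definition fNeg (p : form) : form := fImp p fBot.
Definition fNeq (t t' : term) : form := fNeg (fEq t t').
Definition fOr (p q : form) : form := fNeg (fAnd (fNeg p) (fNeg q)).
Definition fEx (x : nat) (p : form) : form := fNeg (fAll x (fNeg p)).
Definition fTop : form := fNeg fBot.

(* id-models for Sigma: non-empty W, non-empty D, and a world-dependent
   (non-rigid) interpretation of a and b. Equality is identity on D. *)
Record model : Type := {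
  W : Type;
  D : Type;
  w0 : W;
  d0 : D;
  aI : W -> D;
  bI : W -> D
}.

Definition state (M : model) := W M -> Prop.
Definition assignment (M : model) := nat -> D M.

Definition update {M : model} (g : assignment M) (x : nat) (d : D M)
  : assignment M := fun y => if Nat.eqb y x then d else g y.

Definition tval (M : model) (g : assignment M) (w : W M) (t : term) : D M :=
  match t with
  | tvar x => g x
  | tA => aI M w
  | tB => bI M w
  end.

Definition substate {M : model} (t s : state M) : Prop :=
  forall w, t w -> s w.

Fixpoint supp (M : model) (s : state M) (g : assignment M) (p : form)
  {struct p} : Prop :=
  match p with
  | fEq t t' => forall w, s w -> tval M g w t = tval M g w t'
  | fBot => forall w, ~ s w
  | fAnd p q => supp M s g p /\ supp M s g q
  | fIdisj p q => supp M s g p \/ supp M s g q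
  | fImp p q => forall t : state M, substate t s ->
                  supp M t g p -> supp M t g q
  | fAll x p => forall d : D M, supp M s (update g x d) p
  | fIex x p => exists d : D M, supp M s (update g x d) p
  end.

Definition id_entails (Phi : form -> Prop) (psi : form) : Prop :=
  forall (M : model) (s : state M) (g : assignment M),
    (forall phi, Phi phi -> supp M s g phi) -> supp M s g psi.

(* lambda t := Ei x (x = t) with x not in t (t is a constant here, so x := 0)
   and dep(t, t') := lambda t -> lambda t'. *)
Definition lam (t : term) : form := fIex 0 (fEq (tvar 0) t).
Definition dep (t t' : term) : form := fImp (lam t) (lam t').

Fixpoint distinct_from (i : nat) (n : nat) : form :=
  match n with
  | 0 => fTop
  | S m => fAnd (distinct_from i m) (fNeq (tvar m) (tvar i))
  end.

Fixpoint all_distinct (n : nat) : form :=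
  match n with
  | 0 => fTop
  | S m => fAnd (all_distinct m) (distinct_from m m)
  end.

Fixpoint ex_prefix (k : nat) (p : form) : form :=
  match k with
  | 0 => p
  | S m => ex_prefix m (fEx m p)
  end.

Definition chi (n : nat) : form := ex_prefix n (all_distinct n).

Definition X : form -> Prop := fun phi => exists n, phi = chi n.

Definition eta : form :=
  fImp (fAnd (dep tA tB) (fAnd (dep tB tA) (fIex 0 (fNeq (tvar 0) tB))))
       (fIex 0 (fNeq (tvar 0) tA)).

Definition theta : form :=
  fIex 0 (fIex 1 (fNeg (fAnd (fEq (tvar 0) tA) (fEq (tvar 1) tB)))).

(* Main.v *)
Require Import Defs.
From Stdlib Require Import List.
From Stdlib Require Import Arith Lia Classical ClassicalEpsilon FunctionalExtensionality FinFun Decidable.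
Import ListNotations.

Definition single {M : model} (w : W M) : state M := fun v => v = w.

Lemma persist M p : forall s t g, supp M s g p -> substate t s -> supp M t g p.
Proof.
  induction p; simpl; intros s tt g H Hs.
  - intros w Hw; apply H, Hs, Hw.
  - intros w Hw; apply (H w), Hs, Hw.
  - destruct H; split; eauto.
  - destruct H; [left|right]; eauto.
  - intros t1 H1 H2. apply H; auto. intros w Hw; apply Hs, H1, Hw.
  - intros d; eauto.
  - destruct H as [d Hd]; exists d; eauto.
Qed.

Lemma empty_supp M p : forall s g, (forall w, ~ s w) -> supp M s g p.
Proof.
  induction p; simpl; intros s g He.
  - intros w Hw; exfalso; eapply He; eauto.
  - auto.
  - split; auto.
  - left; auto.
  - intros t Ht _. apply IHp2. intros w Hw; eapply He; eauto.
  - intros d; auto.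
  - exists (d0 M); auto.
Qed.

Lemma sing_imp M (w : W M) g p q :
  supp M (single w) g (fImp p q) <-> (supp M (single w) g p -> supp M (single w) g q).
Proof.
  simpl; split.
  - intros H Hp. apply H; auto. intros v Hv; auto.
  - intros H t Ht Hp. destruct (classic (t w)) as [Hw|Hw].
    + assert (supp M (single w) g p) as Hp'.
      { eapply persist; eauto. intros v Hv. unfold single in Hv; subst; auto. }
      eapply persist; eauto.
    + apply empty_supp. intros v Hv. apply Hw. specialize (Ht v Hv).
      unfold single in Ht; subst; auto.
Qed.

Lemma sing_bot M (w : W M) g : supp M (single w) g fBot <-> False.
Proof. simpl; split; [intros H; apply (H w); reflexivity | tauto]. Qed.

Lemma sing_neg M (w : W M) g p :
  supp M (single w) g (fNeg p) <-> ~ supp M (single w) g p.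
Proof. unfold fNeg; rewrite sing_imp, sing_bot; tauto. Qed.

Lemma sing_ex M (w : W M) g x p :
  supp M (single w) g (fEx x p) <-> exists d, supp M (single w) (update g x d) p.
Proof.
  unfold fEx; rewrite sing_neg.
  change (supp M (single w) g (fAll x (fNeg p))) with
    (forall d, supp M (single w) (update g x d) (fNeg p)). split.
  - intros H. apply NNPP; intro Hn; apply H; intro d.
    rewrite sing_neg. intro Hd; apply Hn; eauto.
  - intros [d Hd] H. specialize (H d). rewrite sing_neg in H; auto.
Qed.

Definition Gk {M : model} (k : nat) (ds : nat -> D M) (g : assignment M) : assignment M :=
  fun y => if y <? k then ds y else g y.

Lemma sing_prefix M (w : W M) k : forall p g,
  supp M (single w) g (ex_prefix k p) <-> exists ds, supp M (single w) (Gk k ds g) p.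
Proof.
  induction k; intros p g; simpl.
  - split.
    + intros H; exists (fun _ => d0 M). unfold Gk; simpl. exact H.
    + intros [ds H]; exact H.
  - rewrite IHk. split.
    + intros [ds H]. rewrite sing_ex in H. destruct H as [d H].
      exists (fun y => if y =? k then d else ds y).
      replace (Gk (S k) (fun y => if y =? k then d else ds y) g)
        with (update (Gk k ds g) k d); auto.
      apply functional_extensionality; intro y; unfold update, Gk.
      destruct (Nat.eqb_spec y k), (Nat.ltb_spec y k), (Nat.ltb_spec y (S k)); lia || auto.
    + intros [ds H]. exists ds. rewrite sing_ex. exists (ds k).
      replace (update (Gk k ds g) k (ds k)) with (Gk (S k) ds g); auto.
      apply functional_extensionality; intro y; unfold update, Gk.
      destruct (Nat.eqb_spec y k), (Nat.ltb_spec y k), (Nat.ltb_spec y (S k)); subst; lia || auto.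
Qed.

Lemma sing_top M (w : W M) g : supp M (single w) g fTop.
Proof. unfold fTop; rewrite sing_neg, sing_bot; tauto. Qed.

Lemma sing_distinct_from M (w : W M) g i m :
  supp M (single w) g (distinct_from i m) <-> (forall j, j < m -> g j <> g i).
Proof.
  induction m; simpl distinct_from.
  - split; [intros; lia | intros; apply sing_top].
  - unfold fNeq. change (supp M (single w) g (distinct_from i m) /\
        supp M (single w) g (fNeg (fEq (tvar m) (tvar i)))
      <-> (forall j, j < S m -> g j <> g i)).
    rewrite sing_neg, IHm. simpl. split.
    + intros [H1 H2] j Hj. destruct (Nat.eq_dec j m).
      * subst. intro E; apply H2; intros; exact E.
      * apply H1; lia.
    + intros H; split.
      * intros j Hj; apply H; lia.
      * intros H2. apply (H m); [lia|]. apply (H2 w); reflexivity.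
Qed.

Lemma sing_all_distinct M (w : W M) g n :
  supp M (single w) g (all_distinct n) <-> (forall i j, i < j < n -> g i <> g j).
Proof.
  induction n; simpl all_distinct.
  - split; [intros; lia | intros; apply sing_top].
  - change (supp M (single w) g (all_distinct n) /\ supp M (single w) g (distinct_from n n)
      <-> (forall i j, i < j < S n -> g i <> g j)).
    rewrite IHn, sing_distinct_from. split.
    + intros [H1 H2] i j Hij. destruct (Nat.eq_dec j n).
      * subst. intro E; apply (H2 i); [lia|congruence].
      * apply H1; lia.
    + intros H; split.
      * intros i j Hij; apply H; lia.
      * intros j Hj E. apply (H j n); [lia|congruence].
Qed.

Lemma sing_chi M (w : W M) g n :
  supp M (single w) g (chi n) <-> exists ds : nat -> D M, forall i j, i < j < n -> ds i <> ds j.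
Proof.
  unfold chi. rewrite sing_prefix. split.
  - intros [ds H]. rewrite sing_all_distinct in H. exists ds.
    intros i j Hij. specialize (H i j Hij). unfold Gk in H.
    destruct (Nat.ltb_spec i n), (Nat.ltb_spec j n); lia || auto.
  - intros [ds H]. exists ds. rewrite sing_all_distinct.
    intros i j Hij. unfold Gk.
    destruct (Nat.ltb_spec i n), (Nat.ltb_spec j n); try lia. auto.
Qed.

Fixpoint cls (p : form) : Prop :=
  match p with
  | fEq _ _ | fBot => True
  | fAnd p q | fImp p q => cls p /\ cls q
  | fAll _ p => cls p
  | _ => False
  end.

Lemma cls_supp M p : cls p -> forall s g,
  supp M s g p <-> (forall w, s w -> supp M (single w) g p).
Proof.
  induction p; simpl; intros Hc s g; try tauto.
  - split.
    + intros H w Hw v Hv; unfold single in Hv; subst; auto.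
    + intros H w Hw. apply (H w Hw w). reflexivity.
  - split.
    + intros H w Hw; exfalso; eapply H; eauto.
    + intros H w Hw. apply (H w Hw w). reflexivity.
  - destruct Hc as [C1 C2]. rewrite IHp1, IHp2 by assumption. split.
    + intros [H1 H2] w Hw; split; auto.
    + intros H; split; intros w Hw; apply H; auto.
  - destruct Hc as [C1 C2]. split.
    + intros H w Hw t Ht Hp. apply H; auto. intros v Hv; specialize (Ht v Hv).
      unfold single in Ht; subst; auto.
    + intros H t Ht Hp. rewrite (IHp2 C2). intros w Hw.
      rewrite (IHp1 C1) in Hp. specialize (Hp w Hw).
      apply (H w (Ht w Hw) (single w)); auto. intros v Hv; exact Hv.
  - split.
    + intros H w Hw d. specialize (H d). rewrite IHp in H by auto. apply H; auto.
    + intros H d. rewrite IHp by auto. intros w Hw; apply H; auto.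
Qed.

Lemma cls_prefix k : forall p, cls p -> cls (ex_prefix k p).
Proof. induction k; simpl; intros; auto. apply IHk. simpl; tauto. Qed.

Lemma cls_chi n : cls (chi n).
Proof.
  unfold chi; apply cls_prefix.
  induction n; simpl; [tauto|]. split; auto.
  clear IHn. generalize n at 2. induction n0; simpl; tauto.
Qed.

Lemma upd0 M (g : assignment M) d : update g 0 d 0 = d.
Proof. reflexivity. Qed.

Lemma dep_det M (t : state M) g t1 t2 (F1 F2 : W M -> D M)
  (E1 : forall h w, tval M h w t1 = F1 w) (E2 : forall h w, tval M h w t2 = F2 w) :
  supp M t g (dep t1 t2) -> forall w v, t w -> t v -> F1 w = F1 v -> F2 w = F2 v.
Proof.
  intros H w v Hw Hv E.
  destruct (H (fun u => u = w \/ u = v)) as [d Hd].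
  - intros u [-> | ->]; auto.
  - exists (F1 w). simpl. intros u [-> | ->]; rewrite E1; auto.
  - simpl in Hd. rewrite <- (E2 (update g 0 d) w), <- (E2 (update g 0 d) v).
    rewrite <- (Hd w), <- (Hd v); auto.
Qed.

Lemma det_dep M (t : state M) g t1 t2 (F1 F2 : W M -> D M)
  (E1 : forall h w, tval M h w t1 = F1 w) (E2 : forall h w, tval M h w t2 = F2 w) :
  (forall w v, t w -> t v -> F1 w = F1 v -> F2 w = F2 v) -> supp M t g (dep t1 t2).
Proof.
  intros Hdet t' Ht' [d Hd].
  destruct (classic (exists w1, t' w1)) as [[w1 Hw1]|Hn].
  - exists (F2 w1). intros u Hu.
    change (update g 0 (F2 w1) 0 = tval M (update g 0 (F2 w1)) u t2).
    rewrite E2, upd0. apply Hdet; auto.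
    pose proof (Hd u Hu) as H1. pose proof (Hd w1 Hw1) as H2.
    change (update g 0 d 0 = tval M (update g 0 d) u t1) in H1.
    change (update g 0 d 0 = tval M (update g 0 d) w1 t1) in H2.
    rewrite E1, upd0 in H1, H2. congruence.
  - exists (d0 M). intros u Hu; exfalso; eauto.
Qed.

Lemma neq_supp M (t : state M) g x tc (F : W M -> D M)
  (E : forall h w, tval M h w tc = F w) :
  supp M t g (fNeq (tvar x) tc) <-> (forall w, t w -> g x <> F w).
Proof.
  simpl. split.
  - intros H w Hw Eq. apply (H (single w)) with w.
    + intros v ->; auto.
    + intros v ->. rewrite E; auto.
    + reflexivity.
  - intros H t' Ht' Hq w Hw. apply (H w (Ht' w Hw)). rewrite <- (E g w). apply Hq; auto.
Qed.

Fixpoint pre {T : Type} (nx : list T -> T) (n : nat) : list T :=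
  match n with 0 => [] | S m => nx (pre nx m) :: pre nx m end.

Lemma pre_in {T : Type} (nx : list T -> T) i j : i < j -> In (nx (pre nx i)) (pre nx j).
Proof.
  induction j; intros H; [lia|]. simpl. destruct (Nat.eq_dec i j); [subst; auto|].
  right; apply IHj; lia.
Qed.

Lemma inf_seq (T : Type) :
  (forall n, exists ds : nat -> T, forall i j, i < j < n -> ds i <> ds j) ->
  exists e : nat -> T, forall i j, i < j -> e i <> e j.
Proof.
  intros Hn.
  assert (fresh : forall l : list T, exists d, ~ In d l).
  { intros l. destruct (Hn (S (length l))) as [ds Hds].
    apply NNPP; intro Hc.
    assert (incl (map ds (seq 0 (S (length l)))) l) as Hi.
    { intros x Hx. apply NNPP; intro Hx'. apply Hc; eauto. }
    apply NoDup_incl_length in Hi.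
    - rewrite length_map, length_seq in Hi; lia.
    - apply Injective_map_NoDup_in; [|apply seq_NoDup].
      intros x y Hx Hy E. apply in_seq in Hx, Hy.
      destruct (Nat.lt_trichotomy x y) as [H|[H|H]]; auto; exfalso.
      + apply (Hds x y); auto; lia.
      + apply (Hds y x); auto; lia. }
  assert (nx : forall l : list T, {d | ~ In d l}).
  { intros l; apply constructive_indefinite_description, fresh. }
  exists (fun n => proj1_sig (nx (pre (fun l => proj1_sig (nx l)) n))).
  intros i j Hij E.
  apply (proj2_sig (nx (pre (fun l => proj1_sig (nx l)) j))).
  rewrite <- E. apply (pre_in (fun l => proj1_sig (nx l))); auto.
Qed.

Lemma part1 : id_entails (fun phi => X phi \/ phi = eta) theta.
Proof.
  intros M s g H. apply NNPP; intro Hth.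
  assert (surj : forall d e, exists w, s w /\ aI M w = d /\ bI M w = e).
  { intros d e. apply NNPP; intro Hne. apply Hth. exists d, e.
    intros t Ht [H1 H2] w Hw. apply Hne. exists w.
    specialize (H1 w Hw); specialize (H2 w Hw). simpl in H1, H2. auto. }
  destruct (surj (d0 M) (d0 M)) as [w1 [Hw1 _]].
  assert (inf : forall n, exists ds : nat -> D M, forall i j, i < j < n -> ds i <> ds j).
  { intros n. assert (Hc := H (chi n) (or_introl (ex_intro _ n eq_refl))).
    rewrite (cls_supp M _ (cls_chi n)) in Hc. specialize (Hc w1 Hw1).
    rewrite sing_chi in Hc. exact Hc. }
  destruct (inf_seq _ inf) as [e He].
  assert (Hinj : forall i j, e i = e j -> i = j).
  { intros i j E. destruct (Nat.lt_trichotomy i j) as [L|[L|L]]; auto; exfalso.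
    - apply (He i j); auto.
    - apply (He j i); auto. }
  set (t := fun w => s w /\ ((exists k, aI M w = e k /\ bI M w = e (S k)) \/
                              ((forall k, aI M w <> e k) /\ bI M w = aI M w))).
  assert (Ht : substate t s) by (intros w [Hw _]; exact Hw).
  assert (Heta := H eta (or_intror eq_refl)).
  destruct (Heta t Ht) as [d Hd].
  - split; [|split].
    + apply (det_dep M t g tA tB (aI M) (bI M)); try reflexivity.
      intros w v [_ [[k [A1 B1]]|[A1 B1]]] [_ [[k' [A2 B2]]|[A2 B2]]] E.
      * rewrite A1, A2 in E. apply Hinj in E; subst; congruence.
      * exfalso; apply (A2 k); congruence.
      * exfalso; apply (A1 k'); congruence.
      * congruence.
    + apply (det_dep M t g tB tA (bI M) (aI M)); try reflexivity.
      intros w v [_ [[k [A1 B1]]|[A1 B1]]] [_ [[k' [A2 B2]]|[A2 B2]]] E.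
      * rewrite B1, B2 in E. apply Hinj in E. injection E; intros; subst; congruence.
      * exfalso; apply (A2 (S k)); congruence.
      * exfalso; apply (A1 (S k')); congruence.
      * congruence.
    + exists (e 0). apply (neq_supp M t _ 0 tB (bI M)); [reflexivity|].
      intros w [_ [[k [A1 B1]]|[A1 B1]]]; simpl.
      * rewrite B1. intro E. apply Hinj in E. discriminate.
      * rewrite B1. apply not_eq_sym, A1.
  - rewrite (neq_supp M t (update g 0 d) 0 tA (aI M)) in Hd by reflexivity. simpl in Hd.
    destruct (classic (exists k, d = e k)) as [[k Ek]|Nk].
    + destruct (surj d (e (S k))) as [w [Hw [A B]]].
      apply (Hd w); [|auto]. split; auto. left; exists k; split; congruence.
    + destruct (surj d d) as [w [Hw [A B]]].
      apply (Hd w); [|auto]. split; auto. right; split; [|congruence].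
      intros k E; apply Nk; exists k; congruence.
Qed.

Lemma bound (X0 : list form) : (forall phi, In phi X0 -> X phi) ->
  exists N, forall phi, In phi X0 -> exists n, n <= N /\ phi = chi n.
Proof.
  induction X0 as [|p X0 IH]; intros H.
  - exists 0; intros phi [].
  - destruct IH as [N HN]; [intros; apply H; right; auto|].
    destruct (H p (or_introl eq_refl)) as [m ->].
    exists (max N m). intros phi [<-|Hi].
    + exists m; split; [lia|auto].
    + destruct (HN phi Hi) as [n [Hn ->]]. exists n; split; [lia|auto].
Qed.

Definition fds (N : nat) (i : nat) : Fin.t (S N) :=
  match lt_dec i (S N) with left h => Fin.of_nat_lt h | right _ => Fin.F1 end.

Lemma fds_inj N i j : i < S N -> j < S N -> fds N i = fds N j -> i = j.
Proof.
  unfold fds; intros Hi Hj. destruct (lt_dec i (S N)); [|lia]. destruct (lt_dec j (S N)); [|lia].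
  intros E. apply (f_equal (fun x => proj1_sig (Fin.to_nat x))) in E.
  rewrite !Fin.to_nat_of_nat in E. exact E.
Qed.

Lemma part2 (X0 : list form) : (forall phi, In phi X0 -> X phi) ->
  ~ id_entails (fun phi => In phi X0 \/ phi = eta) theta.
Proof.
  intros HX Hent. destruct (bound X0 HX) as [N HN].
  set (M := Build_model (Fin.t (S N) * Fin.t (S N)) (Fin.t (S N)) (Fin.F1, Fin.F1) Fin.F1
              (@fst _ _) (@snd _ _)).
  specialize (Hent M (fun _ => True) (fun _ : nat => d0 M)).
  destruct Hent as [d [e He]].
  - intros phi [Hi | ->].
    + destruct (HN phi Hi) as [n [Hn ->]].
      rewrite (cls_supp M _ (cls_chi n)). intros w _. rewrite sing_chi.
      exists (fds N). intros i j Hij E. apply fds_inj in E; lia.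
    + intros t _ [Hab [Hba [e He]]].
      rewrite (neq_supp M t (update (fun _ : nat => d0 M) 0 e) 0 tB (@snd _ _)) in He by reflexivity.
      simpl in He.
      apply NNPP; intro Hn.
      assert (Hall : forall d : D M, exists w, t w /\ fst w = d).
      { intros d. apply NNPP; intro Hd. apply Hn. exists d.
        rewrite (neq_supp M t (update (fun _ : nat => d0 M) 0 d) 0 tA (@fst _ _)) by reflexivity.
        simpl. intros w Hw E. apply Hd. exists w; auto. }
      assert (fw : forall d : D M, {w | t w /\ fst w = d}).
      { intros d; apply constructive_indefinite_description, Hall. }
      assert (Hinj : Injective (fun d => snd (proj1_sig (fw d)))).
      { intros x y E. destruct (proj2_sig (fw x)) as [Tx Fx].
        destruct (proj2_sig (fw y)) as [Ty Fy].
        rewrite <- Fx, <- Fy.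
        apply (dep_det M t (fun _ : nat => d0 M) tB tA (@snd _ _) (@fst _ _)
                 (fun _ _ => eq_refl) (fun _ _ => eq_refl) Hba); auto. }
      apply Endo_Injective_Surjective in Hinj;
        [| apply Fin_Finite | intros x y; apply classic].
      destruct (Hinj e) as [x Ex].
      destruct (proj2_sig (fw x)) as [Tx _].
      apply (He _ Tx). simpl in Ex. auto.
  - assert (Hde : supp M (@single M ((d, e) : W M)) (update (update (fun _ : nat => d0 M) 0 d) 1 e)
             (fAnd (fEq (tvar 0) tA) (fEq (tvar 1) tB))).
    { split; intros w Hw; unfold single in Hw; subst; reflexivity. }
    exact (He (@single M ((d, e) : W M)) (fun _ _ => I) Hde ((d, e) : W M) eq_refl).
Qed.

Theorem mainTheorem3 :
  id_entails (fun phi => X phi \/ phi = eta) theta /\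
  (forall X0 : list form,
      (forall phi, In phi X0 -> X phi) ->
      ~ id_entails (fun phi => In phi X0 \/ phi = eta) theta).
Proof. split; [exact part1 | exact part2]. Qed.
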